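(* Assume all features are binary, $x_{i,k}\in\{0,1\}$ for all $i\in[n],k\in[p]$. Let $\mathbf q\in\mathbb R^{2nK}_{\ge0}$, $r\ge0$ and $T\in\mathbb R$, and for $k\in[p]$ define $$\mathrm{Prune}(k\mid\mathbf q,r)=\sum_{i\in[n]}\max\Big\{\sum_{l\in\mathcal D_i}q_{il}x_{l,k},\;x_{i,k}\Big[\sum_{l\in\mathcal D_i}q_{il}-\sum_{j\in\mathcal S_i}q_{ij}(1-x_{j,k})\Big]\Big\}+r\sqrt{\sum_{i\in[n]}\Big[\sum_{l\in\mathcal D_i}\max\{x_{i,k},x_{l,k}\}+\sum_{j\in\mathcal S_i}\max\{x_{i,k},x_{j,k}\}\Big]}.$$ If $\mathrm{Prune}(k\mid\mathbf q,r)\le T$, then for every descendant $k'\supseteq k$ of $k$, $\mathbf C_{k',:}\mathbf q+r\|\mathbf C_{k',:}\|_2\le T$.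
   Context: Let $n,K,p\ge1$ be integers and $[n]=\{1,\dots,n\}$. For each $i\in[n]$ let $\mathbf x_i=(x_{i,1},\dots,x_{i,p})^\top\in\mathbb R^p$, and let $\mathcal D_i,\mathcal S_i\subseteq[n]$ be sets of size $K$ (different-class resp. same-class neighbors of sample $i$). For $i,j\in[n]$ put $\mathbf c_{ij}=(\mathbf x_i-\mathbf x_j)\circ(\mathbf x_i-\mathbf x_j)$ (entrywise product). Vectors in $\mathbb R^{2nK}$ are indexed by the pairs $(i,l)$, $i\in[n]$, $l\in\mathcal D_i$ (''different-class pairs''), and the pairs $(i,j)$, $i\in[n]$, $j\in\mathcal S_i$ (''same-class pairs''); $\mathbf q$ has entries $q_{il},q_{ij}$. $\mathbf C\in\mathbb R^{p\times2nK}$ has column $\mathbf c_{il}$ for each different-class pair and column $-\mathbf c_{ij}$ for each same-class pair; $\mathbf C_{k,:}$ is its $k$-th row. The feature indices $[p]$ are nodes of a rooted graph-mining tree: $x_{i,k}=g(\#(H_k\sqsubseteq G_i))$ with $g(x)=1_{x>0}$, where $H_k$ is the subgraph at node $k$, $G_i$ the $i$-th input graph, $\#(H\sqsubseteq G)$ the number of non-overlapping occurrences of $H$ in $G$, and each node's subgraph is contained in its children's subgraphs. Write $k'\supseteq k$ if $k'$ is a descendant of $k$; then $x_{i,k'}\le x_{i,k}$ for all $i$ whenever $k'\supseteq k$. *)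

(* Defs.v *)
From HB Require Import structures.
From mathcomp Require Import all_boot all_order all_algebra.
Set Implicit Arguments. Unset Strict Implicit. Unset Printing Implicit Defensive.
Import Order.TTheory GRing.Theory Num.Theory.
Local Open Scope ring_scope.

Section Defs.
Variables (R : rcfType) (n p : nat).
(* x i k = x_{i,k}; D i = D_i (different-class neighbours), S i = S_i (same-class).
   qD i l = q_{il} for l in D i ;  qS i j = q_{ij} for j in S i. *)
Variables (x : 'I_n -> 'I_p -> R) (D S : 'I_n -> {set 'I_n})
          (qD qS : 'I_n -> 'I_n -> R).

(* k-th coordinate of c_{ij} = (x_i - x_j) o (x_i - x_j) *)
Definition cc (i j : 'I_n) (k : 'I_p) : R := (x i k - x j k) ^+ 2.

Definition Crow_q (k : 'I_p) : R :=
  \sum_(i < n) (\sum_(l in D i) qD i l * cc i l k)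
  - \sum_(i < n) (\sum_(j in S i) qS i j * cc i j k).

(* || C_{k,:} ||_2  (the columns for same-class pairs are -c_ij, signs vanish when squared) *)
Definition Crow_norm (k : 'I_p) : R :=
  Num.sqrt (\sum_(i < n) (\sum_(l in D i) (cc i l k) ^+ 2)
          + \sum_(i < n) (\sum_(j in S i) (- cc i j k) ^+ 2)).

Definition Prune (r : R) (k : 'I_p) : R :=
  \sum_(i < n)
     Num.max (\sum_(l in D i) qD i l * x l k)
             (x i k * ((\sum_(l in D i) qD i l)
                        - \sum_(j in S i) qS i j * (1 - x j k)))
  + r * Num.sqrt (\sum_(i < n)
        ((\sum_(l in D i) Num.max (x i k) (x l k))
         + \sum_(j in S i) Num.max (x i k) (x j k))).
End Defs.

(* Main.v *)
Require Import Defs.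
From HB Require Import structures.
From mathcomp Require Import all_boot all_order all_algebra.
From mathcomp Require Import lra.
Import Order.TTheory GRing.Theory Num.Theory.
Local Open Scope ring_scope.

Section Aux.
Variable R : rcfType.
Definition bin (a : R) := a = 0 \/ a = 1.

Lemma aux0 (a b d : R) : bin b -> bin d -> b <= d -> a = 0 -> (a - b)^+2 <= d.
Proof. by move=> [->|->] [->|->] h ->; rewrite expr2; lra. Qed.

Lemma aux1 (a b : R) : bin b -> a = 1 -> (a - b)^+2 <= 1.
Proof. by move=> [->|->] ->; rewrite expr2; lra. Qed.

Lemma aux2 (a b d : R) : bin b -> bin d -> b <= d -> a = 1 -> 1 - d <= (a - b)^+2.
Proof. by move=> [->|->] [->|->] h ->; rewrite expr2; lra. Qed.

Lemma aux3 (a b c d : R) : bin a -> bin b -> bin c -> bin d -> a <= c -> b <= d ->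
  ((a - b)^+2)^+2 <= Num.max c d.
Proof.
move=> [->|->] [->|->] [->|->] [->|->] h1 h2; rewrite !expr2 le_max; apply/orP;
  first [by left; lra | by right; lra].
Qed.

Lemma aux4 (a b c d : R) : bin a -> bin b -> bin c -> bin d -> a <= c -> b <= d ->
  (- (a - b)^+2)^+2 <= Num.max c d.
Proof. by move=> *; rewrite sqrrN; apply: aux3. Qed.
End Aux.

Theorem lemma2 (R : rcfType) (n K p : nat)
  (x : 'I_n -> 'I_p -> R) (D S : 'I_n -> {set 'I_n})
  (qD qS : 'I_n -> 'I_n -> R)
  (desc : 'I_p -> 'I_p -> Prop)
  (hD : forall i, #|D i| = K) (hS : forall i, #|S i| = K)
  (hbin : forall i k, x i k = 0 \/ x i k = 1)
  (hmono : forall k k', desc k k' -> forall i, x i k' <= x i k)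
  (hqD : forall i l, l \in D i -> 0 <= qD i l)
  (hqS : forall i j, j \in S i -> 0 <= qS i j)
  (r T : R) (hr : 0 <= r) (k : 'I_p) :
  Prune x D S qD qS r k <= T ->
  forall k' : 'I_p, desc k k' ->
    Crow_q x D S qD qS k' + r * Crow_norm x D S k' <= T.
Proof.
move=> hP k' hd; apply: le_trans hP; rewrite /Crow_q /Crow_norm /Prune /cc.
have hm := hmono _ _ hd.
apply: lerD.
  rewrite -sumrB; apply: ler_sum => i _.
  case: (hbin i k') => hy.
  - rewrite le_max; apply/orP; left.
    rewrite -[X in _ <= X]subr0; apply: lerB.
      apply: ler_sum => l hl; apply: ler_wpM2l; first exact: hqD.
      exact: aux0 (hbin _ _) (hbin _ _) (hm _) hy.
    by apply: sumr_ge0 => j hj; apply: mulr_ge0; [exact: hqS | exact: sqr_ge0].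
  - rewrite le_max; apply/orP; right.
    have hx : x i k = 1 by have := hm i; rewrite hy; case: (hbin i k) => ->; lra.
    rewrite hx mul1r; apply: lerB.
      apply: ler_sum => l hl; rewrite -[X in _ <= X]mulr1; apply: ler_wpM2l;
        first exact: hqD.
      exact: aux1 (hbin _ _) hy.
    apply: ler_sum => j hj; apply: ler_wpM2l; first exact: hqS.
    exact: aux2 (hbin _ _) (hbin _ _) (hm _) hy.
apply: ler_wpM2l => //.
have ge : forall a b : R, 0 <= Num.max a b -> True by [].
rewrite ler_sqrt; last first.
  apply: sumr_ge0 => i _; apply: addr_ge0; apply: sumr_ge0 => l _;
    rewrite le_max; case: (hbin i k) => ->; rewrite ?lexx ?ler01 //.
rewrite -big_split /=; apply: ler_sum => i _; apply: lerD; apply: ler_sum => l _.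
  exact: aux3 (hbin _ _) (hbin _ _) (hbin _ _) (hbin _ _) (hm _) (hm _).
exact: aux4 (hbin _ _) (hbin _ _) (hbin _ _) (hbin _ _) (hm _) (hm _).
Qed.
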